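(* For every integer $n\ge 1$, let $\rho_n$ be the number of distinct Manacher arrays of strings of length $n$ (over arbitrary alphabets), and let $r_{m}$ be the number of distinct rooted duplication trees with $m$ leaves. Then $\rho_n \le r_{n+1}$.
   Context: Strings are indexed from 1; $S[i..j]=S[i]S[i+1]\cdots S[j]$ (empty if $j<i$). A string $P$ is a palindrome if $P[i]=P[|P|-i+1]$ for all $i$. The Manacher array of a string $S$ of length $n$ is the array $\mathsf A[1..2n-1]$ where, for $i=2k-1$, $\mathsf A[i]$ is the largest $r\ge 0$ with $1\le k-r$, $k+r\le n$ and $S[k-r..k+r]$ a palindrome, and for $i=2k$, $\mathsf A[i]$ is the largest $r\ge0$ with $1\le k-r+1$, $k+r\le n$ and $S[k-r+1..k+r]$ a palindrome. Rooted duplication trees: start with the ordered array $(g)$ consisting of a single gene (the root). A tandem-duplication event applied to a current ordered array of genes $(g_1,\dots,g_m)$ chooses a contiguous block $g_i,\dots,g_{i+\ell-1}$ ($1\le i\le i+\ell-1\le m$), creates for each $g_j$ in the block two new genes $\mathrm{lc}(g_j)$, $\mathrm{rc}(g_j)$ (its left and right child), and replaces the block by $\mathrm{lc}(g_i),\dots,\mathrm{lc}(g_{i+\ell-1}),\mathrm{rc}(g_i),\dots,\mathrm{rc}(g_{i+\ell-1})$. A rooted duplication tree is a rooted binary tree (each internal node has a left and a right child) together with the linear order on its leaves, which arises from the single root by some finite sequence of such events (internal nodes are the duplicated genes, leaves are the genes of the final array, in the final array's order). Two such trees are identified if they are isomorphic as rooted binary trees preserving left/right children and the leaf order; $r_m$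 counts the resulting classes with $m$ leaves. *)

(* Defs.v *)
From mathcomp Require Import all_boot.
Set Implicit Arguments. Unset Strict Implicit. Unset Printing Implicit Defensive.

(* 1-indexed substring S[a..b] (empty if b < a), for 1 <= a. *)
Definition substr (T : Type) (s : seq T) (a b : nat) : seq T :=
  take (b.+1 - a) (drop a.-1 s).

Definition palindrome (T : eqType) (P : seq T) : bool := rev P == P.

Definition man_odd (T : eqType) (s : seq T) (k : nat) : nat :=
  \max_(0 <= r < (size s).+1 | [&& r < k, k + r <= size s &
                              palindrome (substr s (k - r) (k + r))]) r.

Definition man_even (T : eqType) (s : seq T) (k : nat) : nat :=
  \max_(0 <= r < (size s).+1 | [&& r <= k, k + r <= size s &
                              palindrome (substr s (k - r).+1 (k + r))]) r.

Definition manacher (T : eqType) (s : seq T) : seq nat :=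
  [seq (if odd i then man_odd s (uphalf i) else man_even s i./2)
  | i <- iota 1 ((size s).*2.-1)].

Definition is_manacher_array (n : nat) (A : seq nat) : Prop :=
  exists (T : eqType) (s : seq T), size s = n /\ manacher s = A.

(* Genes are named by their path from the root: false = left child (lc),
   true = right child (rc).  A duplication event on the block of length
   l >= 1 starting at (0-indexed) position i. *)
Definition dup_event (a : seq (seq bool)) (i l : nat) : seq (seq bool) :=
  let blk := take l (drop i a) in
  take i a ++ [seq rcons g false | g <- blk]
           ++ [seq rcons g true | g <- blk] ++ drop (i + l) a.

Inductive dup_reachable : seq (seq bool) -> Prop :=
| dup_root : dup_reachable [:: [::]]
| dup_step a i l : dup_reachable a -> 0 < l -> i + l <= size a ->
    dup_reachable (dup_event a i l).

(* A rooted duplication tree with m leaves, up to isomorphism, is determined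
   by (and determines) its final ordered array of leaves named by root paths. *)
Definition is_dup_tree (m : nat) (a : seq (seq bool)) : Prop :=
  dup_reachable a /\ size a = m.

Definition has_card (T : eqType) (P : T -> Prop) (k : nat) : Prop :=
  exists s : seq T, [/\ uniq s, forall x, x \in s <-> P x & size s = k].

(* Main.v *)
Require Import Defs.
From mathcomp Require Import all_boot zify.
Set Implicit Arguments. Unset Strict Implicit. Unset Printing Implicit Defensive.

Notation gene := (seq bool).

Lemma size_dup (a : seq gene) i l : i + l <= size a -> size (dup_event a i l) = size a + l.
Proof.
move=> H; rewrite /dup_event !size_cat !size_map size_drop !size_takel ?size_drop; lia.
Qed.

Lemma dup_sizes (a : seq gene) i l : i + l <= size a ->
  size (take i a) = i /\ size (take l (drop i a)) = l.
Proof. move=> H; rewrite !size_takel ?size_drop //; lia. Qed.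

Lemma nth_dup1 (a : seq gene) i l q : i + l <= size a -> q < i ->
  nth [::] (dup_event a i l) q = nth [::] a q.
Proof.
move=> H Hq; have [S1 S2] := dup_sizes H.
rewrite /dup_event nth_cat S1 Hq. by rewrite nth_take.
Qed.

Lemma nth_dup2 (a : seq gene) i l q : i + l <= size a -> i <= q < i + l ->
  nth [::] (dup_event a i l) q = rcons (nth [::] a q) false.
Proof.
move=> H /andP[Hq1 Hq2]; have [S1 S2] := dup_sizes H.
rewrite /dup_event nth_cat S1 ifF; last lia.
rewrite nth_cat size_map S2 ifT; last lia.
rewrite (nth_map [::]); last by rewrite S2; lia.
rewrite nth_take; last lia. rewrite nth_drop; congr (rcons (nth _ _ _) _); lia.
Qed.

Lemma nth_dup3 (a : seq gene) i l q : i + l <= size a -> i + l <= q < i + l + l ->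
  nth [::] (dup_event a i l) q = rcons (nth [::] a (q - l)) true.
Proof.
move=> H /andP[Hq1 Hq2]; have [S1 S2] := dup_sizes H.
rewrite /dup_event nth_cat S1 ifF; last lia.
rewrite nth_cat size_map S2 ifF; last lia.
rewrite nth_cat size_map S2 ifT; last lia.
rewrite (nth_map [::]); last by rewrite S2; lia.
rewrite nth_take; last lia. rewrite nth_drop; congr (rcons (nth _ _ _) _); lia.
Qed.

Lemma nth_dup4 (a : seq gene) i l q : i + l <= size a -> i + l + l <= q ->
  nth [::] (dup_event a i l) q = nth [::] a (q - l).
Proof.
move=> H Hq; have [S1 S2] := dup_sizes H.
rewrite /dup_event nth_cat S1 ifF; last lia.
rewrite nth_cat size_map S2 ifF; last lia.
rewrite nth_cat size_map S2 ifF; last lia.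
rewrite nth_drop; congr (nth _ _ _); lia.
Qed.

Definition pre (x y : gene) := exists z, y = x ++ z.
Definition good (a : seq gene) := uniq a /\ forall x y, x \in a -> y \in a -> pre x y -> x = y.

Lemma pre_rcons x g (b : bool) : pre x (rcons g b) -> x = rcons g b \/ pre x g.
Proof.
case=> z; case/lastP: z => [|z c]; first by rewrite cats0 => ->; left.
rewrite -rcons_cat => /rcons_inj [-> _]; right; by exists z.
Qed.

Lemma pre_rconsl g (b : bool) y : pre (rcons g b) y -> pre g y.
Proof. case=> z ->; exists (b :: z); by rewrite -cats1 -catA. Qed.

Lemma rcons_neq (g : gene) b : rcons g b <> g.
Proof. move=> /(congr1 size); rewrite size_rcons; lia. Qed.

Lemma new_notold (a : seq gene) g b : good a -> g \in a -> rcons g b \notin a.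
Proof.
move=> [_ Hp] Hg; apply/negP => Hr.
have E : g = rcons g b by apply: Hp => //; exists [:: b]; rewrite cats1.
exact: (rcons_neq (esym E)).
Qed.

Lemma good_ABC (A B C : seq gene) : good (A ++ B ++ C) ->
  good (A ++ [seq rcons g false | g <- B] ++ [seq rcons g true | g <- B] ++ C).
Proof.
move=> G; have [U P] := G.
have oldA x : x \in A -> x \in A ++ B ++ C by rewrite mem_cat => ->.
have oldB x : x \in B -> x \in A ++ B ++ C by rewrite !mem_cat => ->; rewrite orbT.
have oldC x : x \in C -> x \in A ++ B ++ C by rewrite !mem_cat => ->; rewrite !orbT.
move: (U); rewrite !cat_uniq => /and5P [UA HA UB HB UC].
have NN b x : x \in [seq rcons g b | g <- B] -> x \notin A ++ B ++ C.
  by case/mapP => g Hg ->; apply: new_notold => //; apply: oldB.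
split.
- rewrite !cat_uniq UA UC !map_inj_uniq ?UB //; try exact: rcons_injl.
  rewrite /=; apply/and4P; split => //.
  + apply/hasPn => x; rewrite !mem_cat => /or3P [] Hx; apply/negP => HxA.
    * by move: (NN _ _ Hx); rewrite (oldA _ HxA).
    * by move: (NN _ _ Hx); rewrite (oldA _ HxA).
    * by move: HA; rewrite has_cat negb_or => /andP[_ /hasP]; apply; exists x.
  + apply/hasPn => x; rewrite mem_cat => /orP [] Hx; apply/negP => Hx2.
    * by case/mapP: Hx => g _ E; case/mapP: Hx2 => g' _; rewrite E => /rcons_inj [].
    * by move: (NN _ _ Hx2); rewrite (oldC _ Hx).
  + apply/hasPn => x Hx; apply/negP => Hx2; by move: (NN _ _ Hx2); rewrite (oldC _ Hx).
- have mem_new x : x \in A ++ [seq rcons g false | g <- B] ++ [seq rcons g true | g <- B] ++ C ->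
     x \in A ++ B ++ C \/ exists g b, g \in B /\ x = rcons g b.
    rewrite !mem_cat => /or4P [] Hx.
    + by left; rewrite Hx.
    + by case/mapP: Hx => g Hg ->; right; exists g, false.
    + by case/mapP: Hx => g Hg ->; right; exists g, true.
    + by left; rewrite Hx !orbT.
  have oldnotB x : x \in A ++ [seq rcons g false | g <- B] ++ [seq rcons g true | g <- B] ++ C ->
     x \in A ++ B ++ C -> x \notin B.
    rewrite !mem_cat => /or4P [] Hx _.
    + by apply/negP => HB'; move: HA; rewrite has_cat negb_or => /andP[/hasP H _]; apply: H; exists x.
    + by move: (NN _ _ Hx); rewrite !mem_cat => /norP [_ /norP [] ].
    + by move: (NN _ _ Hx); rewrite !mem_cat => /norP [_ /norP [] ].
    + by apply/negP => HB'; move: HB => /hasP H; apply: H; exists x.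
  move=> x y Hx Hy Hxy.
  case: (mem_new _ Hx) => [Ox | [g [b [Hg Ex]]]]; case: (mem_new _ Hy) => [Oy | [g' [b' [Hg' Ey]]]].
  + exact: P.
  + subst y; case: (pre_rcons Hxy) => [// | Hxg].
    have Exg := P _ _ Ox (oldB _ Hg') Hxg; subst x.
    by move: (oldnotB _ Hx Ox); rewrite Hg'.
  + subst x; have Hgy := pre_rconsl Hxy.
    have Eg := P _ _ (oldB _ Hg) Oy Hgy; subst y.
    case: Hxy => z /(congr1 size); rewrite size_cat size_rcons; lia.
  + subst x y.
    case: (pre_rcons Hxy) => [// | H2]; have Hgg := pre_rconsl H2.
    have E := P _ _ (oldB _ Hg) (oldB _ Hg') Hgg; subst g'.
    case: H2 => z /(congr1 size); rewrite size_cat size_rcons; lia.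
Qed.

Lemma good_dup (a : seq gene) i l : good a -> i + l <= size a -> good (dup_event a i l).
Proof.
move=> G H; rewrite /dup_event.
have E : a = take i a ++ take l (drop i a) ++ drop (i + l) a.
  by rewrite -{1}(cat_take_drop i a) -{1}(cat_take_drop l (drop i a)) drop_drop addnC.
rewrite E in G; exact: good_ABC.
Qed.

Notation ev := (nat * nat)%type.

Fixpoint fin (H : seq ev) : seq gene :=
  match H with [::] => [:: [::]] | (i, l) :: H' => dup_event (fin H') i l end.

Definition bnd (H : seq ev) : nat := if H is (i, _) :: _ then i.+1 else 0.

Fixpoint canon (H : seq ev) : bool :=
  match H with
  | [::] => true
  | (i, l) :: H' => [&& canon H', 0 < l, i + l <= size (fin H') & bnd H' <= i + l]
  end.

Definition visible (a : seq gene) p s :=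
  p + s + s <= size a /\ forall j, j < s ->
    exists g, nth [::] a (p + j) = rcons g false /\ nth [::] a (p + s + j) = rcons g true.

Definition VB (a : seq gene) b := forall p s, 0 < s -> visible a p s -> p < b.

Lemma VB_dup (a : seq gene) b i l : good a -> VB a b -> 0 < l -> i + l <= size a -> b <= i + l ->
  VB (dup_event a i l) i.+1.
Proof.
move=> G V Hl Hs Hb p s Hs0 [Hsz Hv].
have Ug : uniq (dup_event a i l) by case: (good_dup G Hs).
rewrite size_dup // in Hsz.
rewrite ltnNge; apply/negP => Hpi.
have [g [E1 E2]] := Hv 0 Hs0. rewrite addn0 in E1; rewrite addn0 in E2.
case: (ltnP p (i + l)) => Hp1.
-
  rewrite nth_dup2 // in E1; last lia.
  move/rcons_inj: E1 => [Eg]; subst g.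
  have E3 : nth [::] (dup_event a i l) (p + l) = rcons (nth [::] a p) true.
    rewrite nth_dup3 //; last lia. by rewrite addnK.
  have Hsl : s = l.
    have Hi1 : p + s < size (dup_event a i l) by rewrite size_dup //; lia.
    have Hi2 : p + l < size (dup_event a i l) by rewrite size_dup //; lia.
    have := nth_uniq [::] Hi1 Hi2 Ug.
    rewrite E2 E3 eqxx => /esym/eqP; lia.
  subst s.
  have [g' [E4 _]] := Hv (i + l - p) (ltac:(lia)).
  rewrite (_ : p + (i + l - p) = i + l) in E4; last lia.
  rewrite nth_dup3 // in E4; last lia.
  by move/rcons_inj: E4 => [].
case: (ltnP p (i + l + l)) => Hp2.
- rewrite nth_dup3 // in E1; last lia. by move/rcons_inj: E1 => [].
- have : visible a (p - l) s.
    split; first lia.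
    move=> j Hj; have [g' [F1 F2]] := Hv j Hj; exists g'.
    rewrite nth_dup4 // in F1; last lia. rewrite nth_dup4 // in F2; last lia.
    split; [rewrite -F1 | rewrite -F2]; congr nth; lia.
  move=> /(V _ _ Hs0); lia.
Qed.

Lemma vis_dup (a : seq gene) i l : i + l <= size a -> visible (dup_event a i l) i l.
Proof.
move=> H; split; first by rewrite size_dup //; lia.
move=> j Hj; exists (nth [::] a (i + j)); split.
- rewrite nth_dup2 //; lia.
- rewrite nth_dup3 //; last lia. congr (rcons (nth _ _ _) _); lia.
Qed.

Lemma canon_inv H : canon H ->
  [/\ good (fin H), VB (fin H) (bnd H), 0 < size (fin H) & dup_reachable (fin H)].
Proof.
elim: H => [|[i l] H IH] /=.
- split => //.
  + split => // x y; rewrite !inE => /eqP -> /eqP -> //.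
  + by move=> p s Hs [Hsz _] /=; move: Hsz => /=; lia.
  + exact: dup_root.
- case/and4P => C Hl Hs Hb; case: (IH C) => G V S R; split.
  + exact: good_dup.
  + exact: VB_dup G V Hl Hs Hb.
  + rewrite size_dup //; lia.
  + exact: dup_step.
Qed.

Lemma size_fin H : canon H -> size (fin H) = (sumn [seq e.2 | e <- H]).+1.
Proof.
elim: H => [|[i l] H IH] //= /and4P [C Hl Hs Hb]; rewrite size_dup // IH //; lia.
Qed.

Lemma cat_eqr (T : Type) (s1 s1' s2 s2' : seq T) : size s1 = size s1' ->
  s1 ++ s2 = s1' ++ s2' -> s2 = s2'.
Proof. move=> S E; have := congr1 (drop (size s1)) E; by rewrite drop_size_cat // S drop_size_cat. Qed.

Lemma dup_inj (a a' : seq gene) i l : i + l <= size a -> i + l <= size a' ->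
  dup_event a i l = dup_event a' i l -> a = a'.
Proof.
move=> H H' E.
have Sz : size a = size a' by have := congr1 size E; rewrite !size_dup //; lia.
have [S1 S2] := dup_sizes H; have [S1' S2'] := dup_sizes H'.
move: E; rewrite /dup_event => E.
have EA : take i a = take i a'.
  by have := congr1 (take i) E; rewrite !take_size_cat.
move: E; rewrite EA => /cat_eqr E; have {}E := E erefl.
have EB : take l (drop i a) = take l (drop i a').
  have := congr1 (take l) E; rewrite !take_size_cat ?size_map // => /(inj_map (@rcons_injl _ false)) //.
move: E; rewrite EB => /cat_eqr E; have {}E := E erefl.
move: E => /cat_eqr E; have EC := E erefl.
by rewrite -(cat_take_drop i a) -(cat_take_drop i a') EA -(cat_take_drop l (drop i a))
   -(cat_take_drop l (drop i a')) EB !drop_drop (addnC l) EC.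
Qed.

Lemma canon_inj H1 H2 : canon H1 -> canon H2 -> fin H1 = fin H2 -> H1 = H2.
Proof.
elim: H1 H2 => [|[i l] H1 IH] [|[i' l'] H2] //=.
- move=> _ /and4P [C Hl Hs _] E.
  have := congr1 size E; rewrite size_dup //=; have [_ _ S _] := canon_inv C; lia.
- move=> /and4P [C Hl Hs _] _ E.
  have := congr1 size E; rewrite size_dup //=; have [_ _ S _] := canon_inv C; lia.
move=> /and4P [C1 Hl1 Hs1 Hb1] /and4P [C2 Hl2 Hs2 Hb2] E.
have [G1 V1 _ _] := canon_inv C1; have [G2 V2 _ _] := canon_inv C2.
have W1 := VB_dup G1 V1 Hl1 Hs1 Hb1; have W2 := VB_dup G2 V2 Hl2 Hs2 Hb2.
have X1 := vis_dup Hs1; have X2 := vis_dup Hs2.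
rewrite E in W1 X1.
have Hii : i = i' by have := W1 _ _ Hl2 X2; have := W2 _ _ Hl1 X1; lia.
subst i'.
have Hll : l = l'.
  have [_ Y1] := X1; have [Sz2 Y2] := X2; have [Sz1 _] := X1.
  have [g [A1 A2]] := Y1 0 Hl1; have [g' [B1 B2]] := Y2 0 Hl2.
  rewrite A1 in B1; case/rcons_inj: B1 => Eg; subst g'.
  have Ug : uniq (dup_event (fin H2) i l') by case: (good_dup G2 Hs2).
  have Hi1 : i + l + 0 < size (dup_event (fin H2) i l') by lia.
  have Hi2 : i + l' + 0 < size (dup_event (fin H2) i l') by lia.
  have := nth_uniq [::] Hi1 Hi2 Ug.
  rewrite A2 B2 eqxx => /esym/eqP; lia.
subst l'.
have E' := dup_inj Hs1 Hs2 E.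
by rewrite (IH H2 C1 C2 E').
Qed.

Definition step (st : seq ev * nat * nat) (x : nat) : seq ev * nat * nat :=
  let: (H, m, h) := st in
  if x == h.+2 then
    (match H with (i, l) :: H' => (i.-1, l.+1) :: H' | [::] => [::] end, m.+1, x)
  else ((m - x, 1) :: H, m.+1, x).

Fixpoint psi_acc st (L : seq nat) := if L is x :: L' then psi_acc (step st x) L' else st.

Fixpoint phi (H : seq ev) : seq nat :=
  if H is (i, l) :: H' then
    phi H' ++ [seq size (fin H') - (i + l) + 1 + 2 * j | j <- iota 0 l]
  else [::].

Fixpoint validL m h (L : seq nat) : bool :=
  if L is x :: L' then [&& 0 < x, x <= m, x <= h.+2 & validL m.+1 x L'] else true.

Definition Inv (st : seq ev * nat * nat) : Prop :=
  let: (H, m, h) := st in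
  [/\ canon H, m = size (fin H) &
      if H is (i, _) :: _ then h + i + 1 = m else h = 0].

Lemma fin_cons i l H : fin ((i, l) :: H) = dup_event (fin H) i l.
Proof. by []. Qed.

Lemma phi_cons i l H : phi ((i, l) :: H) =
  phi H ++ [seq size (fin H) - (i + l) + 1 + 2 * j | j <- iota 0 l].
Proof. by []. Qed.

Lemma step_ok H m h x : Inv (H, m, h) -> 0 < x -> x <= m -> x <= h.+2 ->
  Inv (step (H, m, h) x) /\ phi (step (H, m, h) x).1.1 = rcons (phi H) x.
Proof.
case=> C Em Eh Hx1 Hx2 Hx3 /=.
case: eqP => Hxe.
- case: H C Em Eh => [|[i l] H'] C Em Eh.
  + rewrite /= in Em; lia.
  + move: C => /= /and4P [C Hl Hs Hb].
    rewrite fin_cons size_dup // in Em.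
    have Hi : 0 < i by lia.
    have Hs' : i.-1 + l.+1 <= size (fin H') by lia.
    split.
    * split.
      -- rewrite /= C Hs' /=; lia.
      -- rewrite size_dup //; lia.
      -- lia.
    * rewrite (_ : i.-1 + l.+1 = i + l); last lia.
      transitivity (phi H' ++ [seq size (fin H') - (i+l) + 1 + 2*j | j <- iota 0 l.+1]); first by [].
      have -> : iota 0 l.+1 = iota 0 l ++ [:: l] by rewrite -addn1 iotaD.
      rewrite map_cat catA -cats1 /=; congr (_ ++ [:: _]); lia.
- have Hsz : (m - x) + 1 <= size (fin H) by lia.
  split.
  + split.
    * rewrite /= C /= Hsz /=.
      case: H C Em Eh Hsz => [|[i l] H'] C Em Eh Hsz; rewrite /bnd; lia.
    * rewrite fin_cons size_dup //; lia.
    * lia.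
  + rewrite phi_cons -cats1 /=; congr (_ ++ [:: _]); lia.
Qed.

Lemma psi_ok L : forall H m h, Inv (H, m, h) -> validL m h L ->
  let st := psi_acc (H, m, h) L in Inv st /\ phi st.1.1 = phi H ++ L.
Proof.
elim: L => [|x L IH] H m h I; first by rewrite /= cats0.
move=> V0; have /and4P [H1 H2 H3 V] : [&& 0 < x, x <= m, x <= h.+2 & validL m.+1 x L] := V0.
change (psi_acc (H, m, h) (x :: L)) with (psi_acc (step (H, m, h) x) L).
have [I' E] := step_ok I H1 H2 H3.
move: I' E; case E0: (step (H, m, h) x) => [[H' m'] h'] I' E.
have Em' : m' = m.+1 by move: E0; rewrite /step; case: eqP => _ [] _ <-.
have Eh' : h' = x by move: E0; rewrite /step; case: eqP => _ [] _ _ <-.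
subst m' h'.
have [I'' E''] := IH H' m.+1 x I' V.
split => //; rewrite E'' /= E -cats1 -catA //.
Qed.

Definition psi (L : seq nat) := (psi_acc ([::], 1, 0) L).1.1.

Lemma psi_canon L : validL 1 0 L -> canon (psi L) /\ phi (psi L) = L.
Proof.
move=> V; have I0 : Inv ([::], 1, 0) by [].
have [I E] := psi_ok I0 V; move: I E; rewrite /psi.
case: (psi_acc _ L) => [[H m] h] [C _ _] /= E; by split.
Qed.

Lemma psi_inj L1 L2 : validL 1 0 L1 -> validL 1 0 L2 -> fin (psi L1) = fin (psi L2) -> L1 = L2.
Proof.
move=> V1 V2 E; have [C1 P1] := psi_canon V1; have [C2 P2] := psi_canon V2.
by rewrite -P1 -P2 (canon_inj C1 C2 E).
Qed.

Lemma size_phi H : size (phi H) = sumn [seq e.2 | e <- H].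
Proof. elim: H => [|[i l] H IH] //=; rewrite size_cat size_map size_iota IH; lia. Qed.

Lemma psi_size L : validL 1 0 L -> size (fin (psi L)) = (size L).+1.
Proof.
move=> V; have [C P] := psi_canon V.
by rewrite size_fin // -size_phi P.
Qed.

Section Pal.
Variable T : eqType.

Definition lps (p : seq T) : nat :=
  size p - find (fun k => palindrome (drop k p)) (iota 0 (size p).+1).

Lemma pal_nil : palindrome ([::] : seq T). Proof. by []. Qed.

Lemma lps_find (p : seq T) :
  find (fun k => palindrome (drop k p)) (iota 0 (size p).+1) <= size p.
Proof.
have H : has (fun k => palindrome (drop k p)) (iota 0 (size p).+1).
  apply/hasP; exists (size p); first by rewrite mem_iota; lia.
  by rewrite drop_size.
move: H; rewrite has_find size_iota; lia.
Qed.

Lemma lps_le (p : seq T) : lps p <= size p.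
Proof. rewrite /lps; lia. Qed.

Lemma lps_pal (p : seq T) : palindrome (drop (size p - lps p) p).
Proof.
have Hf := lps_find p.
have H : has (fun k => palindrome (drop k p)) (iota 0 (size p).+1).
  apply/hasP; exists (size p); first by rewrite mem_iota; lia.
  by rewrite drop_size.
have := nth_find 0 H; rewrite nth_iota /=; last by rewrite ltnS.
rewrite /lps (_ : size p - (size p - _) = find (fun k => palindrome (drop k p)) (iota 0 (size p).+1)) //; lia.
Qed.

Lemma lps_max (p : seq T) k : k <= size p -> palindrome (drop k p) -> size p - k <= lps p.
Proof.
move=> Hk Hp; rewrite /lps.
case: (leqP (find (fun k => palindrome (drop k p)) (iota 0 (size p).+1)) k) => H; first lia.
have := before_find 0 H; rewrite nth_iota /=; last lia.
by rewrite Hp.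
Qed.

Lemma pal_rev (x : seq T) : palindrome (rev x) = palindrome x.
Proof. by rewrite /palindrome revK eq_sym. Qed.

Lemma pal_inner (w z : T) M : palindrome (w :: rcons M z) -> palindrome M.
Proof.
rewrite /palindrome rev_cons rev_rcons => /eqP [_] /rcons_inj [] E _.
by rewrite E.
Qed.

Lemma lps_pos (p : seq T) : 0 < size p -> 0 < lps p.
Proof.
case/lastP: p => [//|p z] _.
have := @lps_max (rcons p z) (size p) (ltac:(rewrite size_rcons; lia)).
rewrite drop_rcons // drop_size size_rcons => /(_ (eqxx _)); lia.
Qed.

End Pal.

Lemma lps_step (T : eqType) (s : seq T) m : 0 < m -> m <= size s ->
  lps (take m s) <= lps (take m.-1 s) + 2.
Proof.
move=> Hm Hs.
case: s Hs => [//|x0 s0] Hs.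
set s := x0 :: s0.
have E : take m s = rcons (take m.-1 s) (nth x0 s m.-1).
  rewrite -take_nth; [congr take; lia | rewrite /s; lia].
set p := take m.-1 s. set z := nth x0 s m.-1.
have Sp : size p = m.-1 by rewrite size_takel /s; lia.
rewrite E; set L := lps (rcons p z).
case: (leqP L 2) => HL; first lia.
have HLle : L <= (size p).+1 by rewrite -(size_rcons p z) lps_le.
have HP := lps_pal (rcons p z).
rewrite -/L size_rcons drop_rcons in HP; last lia.
move: HP; case ED: (drop ((size p).+1 - L) p) => [|w M].
- have := congr1 size ED; rewrite size_drop /=; lia.
- move/pal_inner => PM.
  have EM : M = drop ((size p).+1 - L).+1 p.
    have := congr1 (drop 1) ED; rewrite drop_drop /= drop0 => <-; congr drop; lia.
  have := @lps_max _ p ((size p).+1 - L).+1 (ltac:(lia)).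
  rewrite -EM => /(_ PM); lia.
Qed.

Lemma pal_suf_reduce (T : eqType) (p : seq T) L l : L <= size p -> l <= L ->
  palindrome (drop (size p - L) p) ->
  palindrome (drop (size p - l) p) = palindrome (take l (drop (size p - L) p)).
Proof.
move=> HL Hl HP.
set Q := drop (size p - L) p.
have SQ : size Q = L by rewrite size_drop; lia.
have E1 : drop (size p - l) p = drop (L - l) Q by rewrite /Q drop_drop; congr drop; lia.
rewrite -/Q in HP.
have E2 : rev (drop (L - l) Q) = take l Q by rewrite -{2}(eqP HP) take_rev SQ.
by rewrite E1 -pal_rev E2.
Qed.

Lemma lps_struct (T U : eqType) (s : seq T) (t : seq U) : size s = size t ->
  (forall j, j <= size s -> lps (take j s) = lps (take j t)) ->
  forall j l, j <= size s -> l <= j ->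
  palindrome (drop (j - l) (take j s)) = palindrome (drop (j - l) (take j t)).
Proof.
move=> Sz HL j; elim/ltn_ind: j => j IH l Hj Hl.
have Sp : size (take j s) = j by rewrite size_takel.
have Sq : size (take j t) = j by rewrite size_takel // -Sz.
have EL := HL j Hj.
have Lle : lps (take j s) <= j by rewrite -{2}Sp lps_le.
have Ps := lps_pal (take j s); have Pt := lps_pal (take j t).
rewrite Sp in Ps; rewrite Sq -EL in Pt.
case: (ltngtP l (lps (take j s))) => Hc.
- have R1 := pal_suf_reduce (ltac:(lia) : lps (take j s) <= size (take j s)) (ltnW Hc) .
  rewrite Sp in R1; rewrite (R1 Ps).
  have R2 := pal_suf_reduce (ltac:(lia) : lps (take j s) <= size (take j t)) (ltnW Hc) .
  rewrite Sq in R2; rewrite (R2 Pt).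
  rewrite !take_drop !take_takel; try lia.
  set L := lps (take j s).
  have Hj' : l + (j - L) < j by lia.
  set j' := l + (j - L).
  have -> : j - L = j' - l by rewrite /j'; lia.
  apply: IH; rewrite /j'; lia.
- have F (V : eqType) (p : seq V) : size p = j -> lps p = lps (take j s) ->
      palindrome (drop (j - l) p) = false.
    move=> Sz' EL'; apply/negP => P.
    have := lps_max (ltac:(lia) : j - l <= size p) P; lia.
  rewrite !F //.
- subst l; by rewrite Ps Pt.
Qed.

Lemma substr_psuf (T : Type) (s : seq T) a b : 0 < a -> a <= b.+1 ->
  substr s a b = drop (b - (b.+1 - a)) (take b s).
Proof.
move=> Ha Hab; rewrite /substr take_drop; congr drop; [lia | congr take; lia].
Qed.

Lemma manacher_eq (T U : eqType) (s : seq T) (t : seq U) : size s = size t ->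
  (forall a b, 0 < a -> a <= b.+1 -> b <= size s ->
     palindrome (substr s a b) = palindrome (substr t a b)) ->
  manacher s = manacher t.
Proof.
move=> Sz HP; rewrite /manacher Sz; apply: eq_map => i.
case: ifP => _.
- rewrite /man_odd Sz; apply: eq_bigl => r.
  case H1: (r < _) => //=; case H2: (_ + r <= size t) => //=.
  apply: HP; lia.
- rewrite /man_even Sz; apply: eq_bigl => r.
  case H1: (r <= _) => //=; case H2: (_ + r <= size t) => //=.
  apply: HP; lia.
Qed.

Definition code (T : eqType) (s : seq T) : seq nat := [seq index x s | x <- s].

Lemma pal_code (T : eqType) (s x : seq T) : {subset x <= s} ->
  palindrome [seq index y s | y <- x] = palindrome x.
Proof.
case: x => [//|y0 x] Hx.
have Hy0 : y0 \in s by apply: Hx; rewrite inE eqxx.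
rewrite /palindrome -map_rev; apply/eqP/eqP => [E|->] //.
have := congr1 (map (nth y0 s)) E; rewrite -!map_comp !map_id_in //.
- move=> y /Hx Hy /=; exact: nth_index.
- move=> y; rewrite mem_rev => /Hx Hy /=; exact: nth_index.
Qed.

Lemma manacher_code (T : eqType) (s : seq T) : manacher (code s) = manacher s.
Proof.
apply: manacher_eq; first by rewrite size_map.
move=> a b _ _ _; rewrite /substr /code -map_drop -map_take pal_code //.
by move=> y /mem_take /mem_drop.
Qed.

Definition lseq (T : eqType) (s : seq T) : seq nat := [seq lps (take j s) | j <- iota 1 (size s)].

Lemma lseq_valid_gen (T : eqType) (s : seq T) k : forall m, 0 < m -> m + k <= (size s).+1 ->
  validL m (lps (take m.-1 s)) [seq lps (take j s) | j <- iota m k].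
Proof.
elim: k => [|k IH] m Hm Hk //=.
have Hms : m <= size s by lia.
have P1 : 0 < lps (take m s) by apply: lps_pos; rewrite size_takel.
have P2 : lps (take m s) <= m by rewrite -{2}(size_takel Hms) lps_le.
have P3 := lps_step Hm Hms.
rewrite P1 P2 /=; apply/andP; split; first lia.
have := IH m.+1 (ltac:(lia)) (ltac:(lia)); by [].
Qed.

Lemma lseq_valid (T : eqType) (s : seq T) : validL 1 0 (lseq s).
Proof.
have := @lseq_valid_gen T s (size s) 1 erefl (ltac:(lia)).
by rewrite take0.
Qed.

Lemma lseq_lps (T U : eqType) (s : seq T) (t : seq U) : size s = size t -> lseq s = lseq t ->
  forall j, j <= size s -> lps (take j s) = lps (take j t).
Proof.
move=> Sz E [|j] Hj; first by rewrite !take0.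
have := congr1 (nth 0 ^~ j) E; rewrite /lseq -Sz.
rewrite !(nth_map 0) ?size_iota // nth_iota //; lia.
Qed.

Lemma undup_count (A B C : eqType) (X : seq A) (f : A -> B) (g : A -> C) :
  {in X &, forall x y, f x = f y -> g x = g y} ->
  size (undup (map g X)) <= size (undup (map f X)).
Proof.
elim: X => [//|x X IH] H /=.
have H' : {in X &, forall x y, f x = f y -> g x = g y}.
  by move=> y z Hy Hz; apply: H; rewrite inE ?Hy ?Hz orbT.
have IH' := IH H'.
case: ifP => Hg; case: ifP => Hf /=; try lia.
exfalso; move/negbT: Hg => /negP; apply.
case/mapP: Hf => y Hy Ey; apply/mapP; exists y => //; apply: H => //.
- by rewrite inE eqxx.
- by rewrite inE Hy orbT.
Qed.

Fixpoint strs (n k : nat) : seq (seq nat) :=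
  if k is k'.+1 then [seq c :: u | c <- iota 0 n, u <- strs n k'] else [:: [::]].

Lemma mem_strs n k u : (u \in strs n k) = (size u == k) && all (fun c => c < n) u.
Proof.
elim: k u => [|k IH] u /=; first by case: u.
apply/allpairsP/andP => [[[c v] /= [Hc Hv ->]]|[Hs Ha]].
- move: Hv; rewrite IH mem_iota /= in Hc * => /andP [Hv Ha]; split => //=; lia.
- case: u Hs Ha => [//|c v] /= Hs /andP [Hc Hv]; exists (c, v) => /=; split => //.
  + rewrite mem_iota; lia.
  + by rewrite IH Hv andbT.
Qed.

Fixpoint E (k : nat) : seq (seq gene) :=
  if k is k'.+1 then
    E k' ++ flatten [seq flatten [seq [seq dup_event a i l | i <- iota 0 (size a - l).+1]
                               | l <- iota 1 (size a)] | a <- E k']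
  else [:: [:: [::]]].

Lemma E_mono k k' : k <= k' -> {subset E k <= E k'}.
Proof.
move=> H; elim: k' H => [|k' IH] H x Hx; first by move: H; rewrite leqn0 => /eqP Hk; subst k.
case: (ltngtP k k'.+1) H => // Hk _.
- by rewrite /= mem_cat IH.
- by subst k.
Qed.

Lemma E_reach k a : a \in E k -> dup_reachable a.
Proof.
elim: k a => [|k IH] a /=; first by rewrite inE => /eqP ->; exact: dup_root.
rewrite mem_cat => /orP [/IH //|].
case/flattenP => s Hs Has; case/mapP: Hs => b Hb Es; subst s.
case/flattenP: Has => s' Hs' Has'; case/mapP: Hs' => l Hl Es'; subst s'.
have Has2 : a \in [seq dup_event b i l | i <- iota 0 (size b - l).+1] := Has'.
case/mapP: Has2 => i Hi ->.
move: Hl Hi; rewrite !mem_iota => Hl Hi.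
apply: dup_step; [exact: IH | |]; move: Hl Hi; set z := size b; set z2 := size b; lia.
Qed.

Lemma reach_E a : dup_reachable a -> a \in E (size a).
Proof.
elim => [|b i l R IH Hl Hs]; first by apply: (@E_mono 0) => //; rewrite inE.
apply: (@E_mono (size b).+1); first by rewrite size_dup //; lia.
rewrite /= mem_cat; apply/orP; right.
apply/flattenP; exists (flatten [seq [seq dup_event b i0 l0 | i0 <- iota 0 (size b - l0).+1] | l0 <- iota 1 (size b)]); first by apply/mapP; exists b.
apply/flattenP; exists [seq dup_event b i0 l | i0 <- iota 0 (size b - l).+1]; first by apply/mapP; exists l => //; rewrite mem_iota; move: Hl Hs; set z := size b; lia.
apply/mapP; exists i => //; rewrite mem_iota; move: Hl Hs; set z := size b; lia.
Qed.

Definition Phi (u : seq nat) : seq gene := fin (psi (lseq u)).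

Unset Implicit Arguments.

Theorem theorem3p1 (n : nat) : 1 <= n ->
  exists rho r : nat,
    [/\ has_card (is_manacher_array n) rho,
        has_card (is_dup_tree n.+1) r &
        rho <= r].
Proof.
move=> _.
set X := strs n n.
set M := undup [seq manacher u | u <- X].
set Tl := undup [seq a <- E n.+1 | size a == n.+1].
have HX u : u \in X -> size u = n.
  by rewrite mem_strs => /andP [/eqP].
exists (size M), (size Tl); split.
- exists M; split => //; first exact: undup_uniq.
  move=> A; rewrite mem_undup; split.
  + case/mapP => u Hu ->; exists nat, u; split => //; exact: HX.
  + case=> T [s [Hs <-]]; apply/mapP; exists (code s); last by rewrite manacher_code.
    rewrite mem_strs size_map Hs eqxx /=; apply/allP => c /mapP [x Hx ->].
    by rewrite -Hs index_mem.
- exists Tl; split => //; first exact: undup_uniq.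
  move=> a; rewrite mem_undup mem_filter; split.
  + case/andP => /eqP Ha Hin; split => //; exact: E_reach Hin.
  + case=> R Ha; apply/andP; split; [by rewrite Ha | by rewrite -Ha; apply: reach_E].
- apply: (@leq_trans (size (undup [seq Phi u | u <- X]))).
  + apply: undup_count => u v Hu Hv E.
    have Vu := lseq_valid u; have Vv := lseq_valid v.
    have El := psi_inj Vu Vv E.
    have Sz : size u = size v by rewrite (HX _ Hu) (HX _ Hv).
    have Hl := lseq_lps Sz El.
    apply: manacher_eq => // a b Ha Hab Hb.
    rewrite !substr_psuf //; apply: lps_struct => //; lia.
  + apply: uniq_leq_size; first exact: undup_uniq.
    move=> a; rewrite mem_undup => /mapP [u Hu ->].
    have V := lseq_valid u; have [C _] := psi_canon V.
    have [_ _ _ R] := canon_inv C.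
    rewrite mem_undup mem_filter /Phi psi_size // size_map size_iota (HX _ Hu) eqxx /=.
    have := reach_E R; rewrite psi_size // /lseq size_map size_iota (HX _ Hu); exact.
Qed.
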